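(* Let $\Gamma=\mathrm{SL}_2(\mathbb Z)$, $\nu_{\mathbb H}\begin{pmatrix}a&b\\c&d\end{pmatrix}=a^2+b^2+c^2+d^2$, and for integers $m_1,m_2$ and $n\ge3$ let $$S_e(m_1,m_2,n)=\sum_{\substack{\gamma\in\Gamma\\ \nu_{\mathbb H}(\gamma)=n}}\exp\big(i(2\theta_1(\gamma)m_1+2\theta_2(\gamma)m_2)\big).$$ If $m_1$ or $m_2$ is odd, then $S_e(m_1,m_2,n)=0$. If both are even, then $$S_e(m_1,m_2,n)=\begin{cases}16\,W_{m_1+m_2}(n+2)\,W_{m_1-m_2}(n-2),& n\equiv2\bmod4,\\ 8\,W^P_{m_1+m_2}(n+2)\,W^P_{m_1-m_2}(n-2),& n\equiv3\bmod4,\\ 0,&\text{otherwise.}\end{cases}$$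
   Context: For $\theta\in\mathbb R$, $r\ge0$ let $k(\theta)=\begin{pmatrix}\cos\theta&\sin\theta\\-\sin\theta&\cos\theta\end{pmatrix}$, $a(e^{-r})=\mathrm{diag}(e^{-r/2},e^{r/2})$; each $\gamma$ is written $\gamma=k(\theta_1(\gamma))a(e^{-r})k(\theta_2(\gamma))$ with $r=d_{\mathbb H}(\gamma i,i)>0$ when $\nu_{\mathbb H}(\gamma)>2$, the angles being determined mod $\pi$. $N(z)=z\bar z$; $w\in\mathbb Z[i]$ is primary if $w\equiv1\bmod(1+i)^3$. $W_m(n)=\frac14\sum_{z\in\mathbb Z[i],N(z)=n}(z/|z|)^m$. For odd $n$, $W^P_m(n)=\sum_{z\in\mathbb Z[i],\,N(z)=n,\,z\text{ primary}}(z/|z|)^m$; $W^P_m(2^l)=e^{i\pi lm/4}$; and $W^P_m(2^ln')=W^P_m(2^l)W^P_m(n')$ for $n'$ odd. *)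

(* Defs.v *)
From HB Require Import structures.
From mathcomp Require Import all_boot all_order all_algebra.
From mathcomp Require Import all_classical all_reals.
From mathcomp Require Import all_analysis.
From mathcomp Require Import complex.

Set Implicit Arguments.
Unset Strict Implicit.
Unset Printing Implicit Defensive.

Import Order.TTheory GRing.Theory Num.Theory.
Local Open Scope ring_scope.
Local Open Scope complex_scope.

Section Defs.
Variable R : realType.

Definition mx22 (T : Type) (a b c d : T) : 'M[T]_2 :=
  \matrix_(i < 2, j < 2)
    if i == 0 :> nat then (if j == 0 :> nat then a else b)
    else (if j == 0 :> nat then c else d).

Definition kmat (t : R) : 'M[R]_2 := mx22 (cos t) (sin t) (- sin t) (cos t).
Definition amat (r : R) : 'M[R]_2 := mx22 (expR (- r / 2)) 0 0 (expR (r / 2)).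

Definition nuH (g : 'M[int]_2) : int := \sum_(i < 2) \sum_(j < 2) g i j ^+ 2.

Definition expi (t : R) : R[i] := cos t +i* sin t.

Definition rng (n : nat) : seq int := [seq (i%:Z - n%:Z)%R | i <- iota 0 (2 * n).+1].

(* Every such
   gamma has entries in [-n, n], so the four-fold sum over rng n enumerates
   exactly the (finite) set {gamma in SL_2(Z) | nu_H(gamma) = n}, each
   element once.  th1, th2 are the angle functions theta_1, theta_2. *)
Definition Se (th1 th2 : 'M[int]_2 -> R) (m1 m2 : int) (n : nat) : R[i] :=
  \sum_(a <- rng n) \sum_(b <- rng n) \sum_(c <- rng n)
   \sum_(d <- rng n | (\det (mx22 a b c d) == 1) && (nuH (mx22 a b c d) == n%:Z))
     expi (2 * th1 (mx22 a b c d) * m1%:~R + 2 * th2 (mx22 a b c d) * m2%:~R).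

Definition zunit (x y : int) (n : nat) : R[i] :=
  (x%:~R +i* y%:~R) / (Num.sqrt (n%:R : R))%:C.

Definition W (m : int) (n : nat) : R[i] :=
  4^-1 * \sum_(x <- rng n) \sum_(y <- rng n | x ^+ 2 + y ^+ 2 == n%:Z)
            zunit x y n ^ m.

(* Divisibility in Z[i]: (a1 + i a2) | (b1 + i b2), i.e.
   (b1 + i b2) * conj(a1 + i a2) / N(a1 + i a2) lies in Z[i]. *)
Definition gdvd (a1 a2 b1 b2 : int) : bool :=
  let N := a1 ^+ 2 + a2 ^+ 2 in
  (N %| b1 * a1 + b2 * a2)%Z && (N %| b2 * a1 - b1 * a2)%Z.

(* w = x + i y is primary iff w = 1 mod (1+i)^3, and (1+i)^3 = -2 + 2i *)
Definition primary (x y : int) : bool := gdvd (-2) 2 (x - 1) y.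

Definition WPodd (m : int) (n : nat) : R[i] :=
  \sum_(x <- rng n) \sum_(y <- rng n | (x ^+ 2 + y ^+ 2 == n%:Z) && primary x y)
     zunit x y n ^ m.

Definition WP (m : int) (n : nat) : R[i] :=
  let l := logn 2 n in
  expi (pi * l%:R * m%:~R / 4) * WPodd m (n %/ 2 ^ l).

End Defs.

(* Main.v *)
Require Import Defs.
From HB Require Import structures.
From mathcomp Require Import all_boot all_order all_algebra.
From mathcomp Require Import all_classical all_reals.
From mathcomp Require Import all_analysis.
From mathcomp Require Import complex.
From mathcomp Require Import zify ring lra.

Import Order.TTheory GRing.Theory Num.Theory.
Local Open Scope ring_scope.
Local Open Scope complex_scope.

Lemma det_mx22 (a b c d : int) : \det (mx22 a b c d) = a * d - b * c.
Proof.
rewrite (expand_det_row _ ord0) !big_ord_recr !big_ord0 /= /cofactor !det_mx11 !mxE /=.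
rewrite ?add0n ?expr0 ?expr1; ring.
Qed.

Lemma nuH_mx22 (a b c d : int) : nuH (mx22 a b c d) = a^+2 + b^+2 + c^+2 + d^+2.
Proof.
rewrite /nuH !big_ord_recr !big_ord0 /= !mxE /=; ring.
Qed.
Section S.
Variable R : realType.

Lemma expiD (s t : R) : expi (s + t) = expi s * expi t.
Proof. by rewrite /expi cosD sinD /=; congr (_ +i* _); ring. Qed.

Lemma expi0 : expi (0 : R) = 1.
Proof. by rewrite /expi cos0 sin0. Qed.

Lemma expiMn (t : R) (n : nat) : expi (t * n%:R) = expi t ^+ n.
Proof.
elim: n => [|n IH]; first by rewrite mulr0 expi0.
by rewrite -addn1 natrD mulrDr mulr1 expiD IH exprD expr1.
Qed.

Lemma expiMz (t : R) (k : int) : expi (t * k%:~R) = expi t ^ k.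
Proof.
case: k => n; first by rewrite -exprnP expiMn.
rewrite NegzE -invr_expz -exprnP -expiMn.
have H : expi (t * n.+1%:R) * expi (t * (- n.+1%:Z)%:~R) = 1.
  by rewrite -expiD rmorphN /= mulrN subrr expi0.
apply: (mulfI (x := expi (t * n.+1%:R))).
  by apply/eqP => H0; move: H; rewrite H0 mul0r => /eqP; rewrite eq_sym oner_eq0.
rewrite H divff //.
by apply/eqP => H0; move: H; rewrite H0 mul0r => /eqP; rewrite eq_sym oner_eq0.
Qed.

Definition jj : R[i] := 0 +i* 1.

Lemma zunit_rot (x y : int) n : zunit R (- y) x n = jj * zunit R x y n.
Proof.
rewrite /zunit mulrA; congr (_ / _).
rewrite /jj /= rmorphN /=; congr (_ +i* _); ring.
Qed.

Lemma zunit_neg (x y : int) n : zunit R (- x) (- y) n = - zunit R x y n.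
Proof.
rewrite /zunit -mulNr; congr (_ / _).
by rewrite !rmorphN /=.
Qed.

Lemma zunit_rot' (x y : int) n : zunit R y (- x) n = - jj * zunit R x y n.
Proof.
rewrite /zunit mulrA; congr (_ / _).
rewrite /jj /= rmorphN /=; congr (_ +i* _); ring.
Qed.

Lemma jj2 : jj ^+ 2 = -1.
Proof. rewrite /jj expr2 /=; congr (_ +i* _); ring. Qed.
End S.

Section Term.
Variable R : realType.

Lemma kak_entries (t1 t2 r : R) (a b c d : int) :
  map_mx (fun z : int => z%:~R) (mx22 a b c d) = kmat t1 *m amat r *m kmat t2 ->
  [/\ (a%:~R : R) = cos t1 * cos t2 * expR (- r / 2) - sin t1 * sin t2 * expR (r / 2),
      (b%:~R : R) = cos t1 * sin t2 * expR (- r / 2) + sin t1 * cos t2 * expR (r / 2),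
      (c%:~R : R) = - sin t1 * cos t2 * expR (- r / 2) - cos t1 * sin t2 * expR (r / 2) &
      (d%:~R : R) = - sin t1 * sin t2 * expR (- r / 2) + cos t1 * cos t2 * expR (r / 2)].
Proof.
move=> E.
have e (i j : 'I_2) := congr1 (fun M : 'M[R]_2 => M i j) E.
move: (e ord0 ord0) (e ord0 1%R) (e 1%R ord0) (e 1%R 1%R).
rewrite /kmat /amat !mxE !big_ord_recr !big_ord0 /= !mxE !big_ord_recr !big_ord0 /= !mxE /=.
move=> -> -> -> ->; split; ring.
Qed.

Lemma term_eq (th1 th2 : 'M[int]_2 -> R)
  (Hdec : forall g : 'M[int]_2, \det g = 1 -> 2 < nuH g ->
     exists r : R, 0 < r /\
       map_mx (fun z : int => z%:~R) g = kmat (th1 g) *m amat r *m kmat (th2 g))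
  (a b c d : int) (n : nat) (hn : (3 <= n)%N) (Hdet : a * d - b * c = 1)
  (Hnu : a^+2 + b^+2 + c^+2 + d^+2 = n%:Z) (m1 m2 : int) :
  expi (2 * th1 (mx22 a b c d) * m1%:~R + 2 * th2 (mx22 a b c d) * m2%:~R) =
  zunit R (a + d) (b - c) n.+2 ^ (m1 + m2) *
  (- zunit R (a - d) (- (b + c)) (n - 2)) ^ (m1 - m2).
Proof.
have Hg : \det (mx22 a b c d) = 1 by rewrite det_mx22.
have Hn : 2 < nuH (mx22 a b c d) by rewrite nuH_mx22 Hnu; lia.
have [r [r0 E]] := Hdec (mx22 a b c d) Hg Hn.
have [ha hb hc hd] := kak_entries _ _ _ _ _ _ _ E.
have ef : expR (- r / 2) < expR (r / 2) by rewrite ltr_expR; lra.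
have e0 : 0 < expR (- r / 2) := expR_gt0 _.
move: (th1 (mx22 a b c d)) (th2 (mx22 a b c d)) (expR (- r / 2)) (expR (r / 2)) ha hb hc hd ef e0
  => t1 t2 e f ha hb hc hd ef e0.
have hz1 : ((a + d)%:~R : R) = cos (t1 + t2) * (e + f) by rewrite rmorphD /= ha hd cosD; ring.
have hz2 : ((b - c)%:~R : R) = sin (t1 + t2) * (e + f) by rewrite rmorphB /= hb hc sinD; ring.
have hw1 : ((a - d)%:~R : R) = cos (t1 - t2) * (e - f) by rewrite rmorphB /= ha hd cosB; ring.
have hw2 : ((- (b + c))%:~R : R) = sin (t1 - t2) * (e - f) by rewrite rmorphN rmorphD /= hb hc sinB; ring.
have N1 : (a + d)^+2 + (b - c)^+2 = (n.+2)%:Z.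
  have -> : (a + d)^+2 + (b - c)^+2 = (a^+2 + b^+2 + c^+2 + d^+2) + 2 * (a * d - b * c) by ring.
  rewrite Hnu Hdet; lia.
have N2 : (a - d)^+2 + (- (b + c))^+2 = (n - 2)%N%:Z.
  have -> : (a - d)^+2 + (- (b + c))^+2 = (a^+2 + b^+2 + c^+2 + d^+2) - 2 * (a * d - b * c) by ring.
  rewrite Hnu Hdet; lia.
have hS1 : Num.sqrt ((n.+2)%:R : R) = e + f.
  have -> : ((n.+2)%:R : R) = (e + f) ^+ 2.
    have -> : ((n.+2)%:R : R) = ((n.+2)%:Z)%:~R by [].
    rewrite -N1 rmorphD /= !rmorphXn /= hz1 hz2.
    transitivity ((e + f) ^+ 2 * (cos (t1 + t2) ^+ 2 + sin (t1 + t2) ^+ 2)); first ring.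
    by rewrite cos2Dsin2 mulr1.
  rewrite sqrtr_sqr ger0_norm //; lra.
have hS2 : Num.sqrt (((n - 2)%N)%:R : R) = f - e.
  have -> : (((n - 2)%N)%:R : R) = (e - f) ^+ 2.
    have -> : (((n - 2)%N)%:R : R) = (((n - 2)%N)%:Z)%:~R by [].
    rewrite -N2 rmorphD /= !rmorphXn /= hw1 hw2.
    transitivity ((e - f) ^+ 2 * (cos (t1 - t2) ^+ 2 + sin (t1 - t2) ^+ 2)); first ring.
    by rewrite cos2Dsin2 mulr1.
  rewrite sqrtr_sqr ler0_norm; [ring | lra].
have hU1 : zunit R (a + d) (b - c) n.+2 = expi (t1 + t2).
  rewrite /zunit hS1 hz1 hz2.
  have -> : ((cos (t1 + t2) * (e + f)) +i* (sin (t1 + t2) * (e + f))) = expi (t1 + t2) * (e + f : R)%:C.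
    by rewrite /expi /=; congr (_ +i* _); ring.
  rewrite mulfK //; apply/eqP => /(congr1 (@complex.Re R)) /=; lra.
have hU2 : zunit R (a - d) (- (b + c)) (n - 2) = - expi (t1 - t2).
  rewrite /zunit hS2 hw1 hw2.
  have -> : ((cos (t1 - t2) * (e - f)) +i* (sin (t1 - t2) * (e - f))) = - expi (t1 - t2) * (f - e : R)%:C.
    by rewrite /expi /=; congr (_ +i* _); ring.
  rewrite mulfK //; apply/eqP => /(congr1 (@complex.Re R)) /=; lra.
have -> : 2 * t1 * m1%:~R + 2 * t2 * m2%:~R = (t1 + t2) * (m1 + m2)%:~R + (t1 - t2) * (m1 - m2)%:~R.
  by rewrite rmorphD rmorphB /=; ring.
by rewrite expiD !expiMz hU1 hU2 opprK.
Qed.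
End Term.

Set Implicit Arguments.
Unset Strict Implicit.

Lemma mem_rng (n : nat) (x : int) : (x \in rng n) = (- n%:Z <= x <= n%:Z).
Proof.
apply/mapP/idP => [ [k] | H].
  rewrite mem_iota => Hi ->; lia.
exists (absz (x + n%:Z)); last lia.
rewrite mem_iota; lia.
Qed.

Lemma rng_uniq n : uniq (rng n).
Proof.
rewrite map_inj_uniq ?iota_uniq // => i j /eqP; rewrite subr_eq subrK => /eqP [] //.
Qed.

Definition pairs (T1 T2 : Type) (s : seq T1) (t : seq T2) := [seq (x, y) | x <- s, y <- t].

Lemma mem_pairs (T1 T2 : eqType) (s : seq T1) (t : seq T2) x y :
  ((x, y) \in pairs s t) = (x \in s) && (y \in t).
Proof.
apply/allpairsP/andP => [ [[a b] /= [Ha Hb [-> ->]]] // | [Hx Hy]].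
by exists (x, y).
Qed.

Lemma pairs_uniq (T1 T2 : eqType) (s : seq T1) (t : seq T2) :
  uniq s -> uniq t -> uniq (pairs s t).
Proof. by move=> Us Ut; apply: allpairs_uniq => // [[a b] [c d]] _ _. Qed.

Lemma perm_inj_map (T : eqType) (s : seq T) (f : T -> T) :
  uniq s -> injective f -> (forall q, q \in s -> f q \in s) -> perm_eq s (map f s).
Proof.
move=> Us If Hs.
have Um : uniq (map f s) by rewrite map_inj_uniq.
have Sub : {subset map f s <= s} by move=> q /mapP [q0 H0 ->]; apply: Hs.
have [_ E] := uniq_min_size Um Sub (eq_leq (esym (size_map f s))).
by apply: uniq_perm => // q; rewrite E.
Qed.


Lemma sqmod (x : int) : exists q j, (x = 2*j /\ (x^+2 = 8*q \/ x^+2 = 8*q+4)) \/ (x = 2*j+1 /\ x^+2 = 8*q+1).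
Proof.
have [j [r [-> Hr]]] : exists j r, x = 4 * j + r /\ 0 <= r < 4.
  exists (x %/ 4)%Z, (x %% 4)%Z; split; first by rewrite mulrC -divz_eq.
  rewrite modz_ge0 //= ltz_pmod //.
have : r = 0 \/ r = 1 \/ r = 2 \/ r = 3 by lia.
case=> [->|[->|[->|->]]].
- exists (2*j^+2), (2*j); left; split; [ring|left; ring].
- exists (2*j^+2+j), (2*j); right; split; ring.
- exists (2*j^+2+2*j), (2*j+1); left; split; [ring|right; ring].
- exists (2*j^+2+3*j+1), (2*j+1); right; split; ring.
Qed.

Lemma primaryE x y : primary x y = (2 %| y)%Z && (4 %| x - 1 - y)%Z.
Proof.
rewrite /primary /gdvd.
have -> : (-2 : int) ^+ 2 + 2 ^+ 2 = 8 by [].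
apply/andP/andP => -[H1 H2]; split; lia.
Qed.

Lemma L1 (x y : int) : (4 %| x^+2 + y^+2)%Z -> (2 %| x)%Z && (2 %| y)%Z.
Proof.
have [q1 [j1 H3]] := sqmod x. have [q2 [j2 H4]] := sqmod y. lia.
Qed.

Lemma L2 (x y : int) : ~~ (2 %| x^+2 + y^+2)%Z -> (2 %| x)%Z = ~~ (2 %| y)%Z.
Proof.
have [q1 [j1 H3]] := sqmod x. have [q2 [j2 H4]] := sqmod y. lia.
Qed.

Lemma L3 (x y x' y' t : int) : x^+2 + y^+2 = 4 * t + 2 -> x'^+2 + y'^+2 = 4*t - 2 -> False.
Proof.
have [q1 [j1 H3]] := sqmod x. have [q2 [j2 H4]] := sqmod y.
have [q3 [j3 H5]] := sqmod x'. have [q4 [j4 H6]] := sqmod y'.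
lia.
Qed.

Lemma L4 (x y t : int) : x^+2 + y^+2 = 4 * t + 3 -> False.
Proof.
have [q1 [j1 H3]] := sqmod x. have [q2 [j2 H4]] := sqmod y. lia.
Qed.

Lemma L5 (x y : int) : ~~ (2 %| x^+2 + y^+2)%Z -> primary x y -> ~~ (2 %| x)%Z.
Proof. move=> /L2 ->; rewrite primaryE => /andP [-> _] //. Qed.

Lemma L6 (x y : int) : ~~ (2 %| x)%Z -> (2 %| y)%Z -> primary (- x) (- y) = ~~ primary x y.
Proof. rewrite !primaryE => H1 H2; lia. Qed.

Lemma sq_bound (x : int) : - (x ^+ 2) <= x <= x ^+ 2.
Proof. have [h|h] : x <= 0 \/ 1 <= x by lia. all: nia. Qed.



Section Comb.
Variable R : realType.

Lemma reindex (T : eqType) (s : seq T) (f : T -> T) (P : pred T) (F : T -> R[i]) :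
  perm_eq s (map f s) ->
  \sum_(q <- s | P q) F q = \sum_(q <- s | P (f q)) F (f q).
Proof. by move=> H; rewrite {1}(perm_big _ H) big_map. Qed.


Lemma mul4C (a b c d : R[i]) : a * b * (c * d) = (a * c) * (b * d).
Proof. ring. Qed.

Lemma negneg (x w : R[i]) : - (- x * w) = (- x) * (- w).
Proof. ring. Qed.

Lemma jj_neq0 : jj R != 0.
Proof. by apply/eqP => /(congr1 (@complex.Im R)) /= /eqP; rewrite oner_eq0. Qed.

Lemma neg1z (k : int) : (-1 : R[i]) ^ k = if (2 %| k)%Z then 1 else -1.
Proof.
rewrite {1}(divz_eq k 2) expfzDr ?oppr_eq0 ?oner_eq0 //.
rewrite (mulrC (k %/ 2)%Z) -exprz_exp.
have -> : (-1 : R[i]) ^ (2 : int) = 1 by rewrite -exprnP sqrrN expr1n.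
rewrite exp1rz mul1r.
have : (k %% 2)%Z = 0 \/ (k %% 2)%Z = 1 by lia.
case=> h; rewrite h.
  have -> : (2 %| k)%Z by lia. by rewrite expr0z.
have -> : (2 %| k)%Z = false by lia. by rewrite expr1z.
Qed.

Lemma jj2z (k : int) : jj R ^ (2 * k) = if (2 %| k)%Z then 1 else -1.
Proof.
by rewrite -exprz_exp -exprnP jj2 neg1z.
Qed.

Lemma jj2z_odd (k : int) : ~~ (2 %| k)%Z -> jj R ^ (2 * k) = -1.
Proof. by move=> h; rewrite jj2z (negbTE h). Qed.

Lemma jj2z_even (k : int) : (2 %| k)%Z -> jj R ^ (2 * k) = 1.
Proof. by move=> h; rewrite jj2z h. Qed.

Lemma negz_even (x : R[i]) (k : int) : (2 %| k)%Z -> (- x) ^ k = x ^ k.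
Proof. by move=> h; rewrite expNrz neg1z h mul1r. Qed.

Definition goodT (n : nat) (q : (int * int) * (int * int)) : bool :=
  [&& q.1.1 ^+ 2 + q.1.2 ^+ 2 == (n.+2)%:Z, q.2.1 ^+ 2 + q.2.2 ^+ 2 == ((n - 2)%N)%:Z,
      (2 %| q.1.1 - q.2.1)%Z & (2 %| q.1.2 - q.2.2)%Z].

Definition GT (n : nat) (M M' : int) (q : (int * int) * (int * int)) : R[i] :=
  zunit R q.1.1 q.1.2 n.+2 ^ M * (- zunit R q.2.1 q.2.2 (n - 2)) ^ M'.

Definition QT (n : nat) := pairs (pairs (rng n.+2) (rng n.+2)) (pairs (rng (n - 2)) (rng (n - 2))).

Definition ST (n : nat) (M M' : int) := \sum_(q <- QT n | goodT n q) GT n M M' q.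

Lemma QT_uniq n : uniq (QT n).
Proof. by rewrite /QT !pairs_uniq ?rng_uniq. Qed.

Lemma ST_odd n (m1 m2 : int) : ~~ (2 %| m1)%Z || ~~ (2 %| m2)%Z ->
  ST n (m1 + m2) (m1 - m2) = 0.
Proof.
move=> hodd.
suff H : ST n (m1 + m2) (m1 - m2) = - ST n (m1 + m2) (m1 - m2).
  have : ST n (m1 + m2) (m1 - m2) *+ 2 == 0 by rewrite mulr2n {1}H addNr.
  by rewrite mulrn_eq0 => /eqP.
rewrite /ST.
have Hjj : jj R ^ (m1 + m2) * jj R ^ (m1 - m2) = jj R ^ (2 * m1).
  by rewrite -expfzDr ?jj_neq0 //; congr (_ ^ _); ring.
have Hjj' : jj R ^ (m1 + m2) * (- jj R) ^ (m1 - m2) = jj R ^ (2 * m2).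
  have -> : - jj R = (jj R)^-1.
    apply: (mulfI jj_neq0); rewrite divff ?jj_neq0 // mulrN -expr2 jj2 opprK //.
  by rewrite exprz_inv -expfzDr ?jj_neq0 //; congr (_ ^ _); ring.
case: (boolP (2 %| m1)%Z) => h1.
- have h2 : ~~ (2 %| m2)%Z by move: hodd; rewrite h1.
  pose f (q : (int * int) * (int * int)) := ((- q.1.2, q.1.1), (q.2.2, - q.2.1)).
  have Pf : perm_eq (QT n) (map f (QT n)).
    apply: perm_inj_map; first exact: QT_uniq.
      move=> [[a b] [c d]] [[a' b'] [c' d']] /= [] h3 h4 h5 h6.
      congr ((_, _), (_, _)); lia.
    move=> [[a b] [c d]]; rewrite /QT !mem_pairs !mem_rng /=; lia.
  rewrite {1}(reindex _ _ Pf) -sumrN; apply: eq_big => [[[a b] [c d]]|[[a b] [c d]] _].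
    rewrite /goodT /= !sqrrN; lia.
  rewrite /GT /= zunit_rot zunit_rot'.
  rewrite negneg (expfzMl (jj R)) (expfzMl (- jj R)).
  transitivity ((jj R ^ (m1 + m2) * (- jj R) ^ (m1 - m2)) *
    (zunit R a b n.+2 ^ (m1 + m2) * (- zunit R c d (n - 2)) ^ (m1 - m2))).
  by rewrite mul4C.
  by rewrite Hjj' (jj2z_odd h2) mulN1r.
- have h1' : ~~ (2 %| m1)%Z by rewrite h1.
  pose f (q : (int * int) * (int * int)) := ((- q.1.2, q.1.1), (- q.2.2, q.2.1)).
  have Pf : perm_eq (QT n) (map f (QT n)).
    apply: perm_inj_map; first exact: QT_uniq.
      move=> [[a b] [c d]] [[a' b'] [c' d']] /= [] h3 h4 h5 h6.
      congr ((_, _), (_, _)); lia.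
    move=> [[a b] [c d]]; rewrite /QT !mem_pairs !mem_rng /=; lia.
  rewrite {1}(reindex _ _ Pf) -sumrN; apply: eq_big => [[[a b] [c d]]|[[a b] [c d]] _].
    rewrite /goodT /= !sqrrN; lia.
  rewrite /GT /= !zunit_rot.
  rewrite -mulrN !(expfzMl (jj R)).
  transitivity ((jj R ^ (m1 + m2) * jj R ^ (m1 - m2)) *
    (zunit R a b n.+2 ^ (m1 + m2) * (- zunit R c d (n - 2)) ^ (m1 - m2))).
  by rewrite mul4C.
  by rewrite Hjj (jj2z_odd h1') mulN1r.
Qed.


End Comb.

Section D.
Variable R : realType.

Lemma Wpair (M : int) (N : nat) : W R M N = 4^-1 *
  \sum_(p <- pairs (rng N) (rng N) | p.1 ^+ 2 + p.2 ^+ 2 == N%:Z) zunit R p.1 p.2 N ^ M.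
Proof.
rewrite /W; congr (_ * _); rewrite [RHS]big_mkcond /pairs big_allpairs; apply: eq_bigr => x _.
by rewrite [LHS]big_mkcond.
Qed.

Lemma WPpair (M : int) (N : nat) : WPodd R M N =
  \sum_(p <- pairs (rng N) (rng N) | (p.1 ^+ 2 + p.2 ^+ 2 == N%:Z) && primary p.1 p.2)
     zunit R p.1 p.2 N ^ M.
Proof.
rewrite /WPodd [RHS]big_mkcond /pairs big_allpairs; apply: eq_bigr => x _.
by rewrite [LHS]big_mkcond.
Qed.

Lemma prod_split (P1 P2 : seq (int * int)) (A B : pred (int * int)) (f g : int * int -> R[i]) :
  \sum_(q <- pairs P1 P2 | A q.1 && B q.2) f q.1 * g q.2 =
  (\sum_(p <- P1 | A p) f p) * (\sum_(p <- P2 | B p) g p).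
Proof.
rewrite big_mkcond /pairs big_allpairs big_distrl /= [RHS]big_mkcond.
apply: eq_bigr => p _ /=; case: (A p) => /=.
  by rewrite big_distrr /= [RHS]big_mkcond; apply: eq_bigr => p' _; case: (B p').
by rewrite big1.
Qed.

Lemma prod_split2 (P1 P2 : seq (int * int)) (A B e e' : pred (int * int))
  (f g : int * int -> R[i]) :
  \sum_(q <- pairs P1 P2 | A q.1 && B q.2 && (e q.1 == e' q.2)) f q.1 * g q.2 =
  (\sum_(p <- P1 | A p && e p) f p) * (\sum_(p <- P2 | B p && e' p) g p) +
  (\sum_(p <- P1 | A p && ~~ e p) f p) * (\sum_(p <- P2 | B p && ~~ e' p) g p).
Proof.
rewrite (bigID (fun q => e q.1)) /= -!prod_split; congr (_ + _); apply: eq_bigl => q.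
  by case: (A q.1) (B q.2) (e q.1) (e' q.2) => [] [] [] [].
by case: (A q.1) (B q.2) (e q.1) (e' q.2) => [] [] [] [].
Qed.


Lemma rng_neg (N : nat) : perm_eq (pairs (rng N) (rng N)) (map (fun p : int * int => (- p.1, - p.2)) (pairs (rng N) (rng N))).
Proof.
apply: perm_inj_map; first by rewrite pairs_uniq ?rng_uniq.
  move=> [a b] [a' b'] /= [] h1 h2; congr (_, _); lia.
move=> [a b]; rewrite !mem_pairs !mem_rng /=; lia.
Qed.

Lemma rng_rot (N : nat) : perm_eq (pairs (rng N) (rng N)) (map (fun p : int * int => (- p.2, p.1)) (pairs (rng N) (rng N))).
Proof.
apply: perm_inj_map; first by rewrite pairs_uniq ?rng_uniq.
  move=> [a b] [a' b'] /= [] h1 h2; congr (_, _); lia.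
move=> [a b]; rewrite !mem_pairs !mem_rng /=; lia.
Qed.

Lemma two_mul (x : R[i]) : x + x = 2 * x.
Proof. ring. Qed.

Lemma OddHalf (N : nat) (K : int) : ~~ (2 %| N%:Z)%Z -> (2 %| K)%Z ->
  \sum_(p <- pairs (rng N) (rng N) | (p.1 ^+ 2 + p.2 ^+ 2 == N%:Z) && ~~ (2 %| p.1)%Z)
     zunit R p.1 p.2 N ^ K = 2 * WPodd R K N.
Proof.
move=> hN hK.
rewrite WPpair (bigID (fun p => primary p.1 p.2)) /=.
have E1 : forall p : int * int, ((p.1 ^+ 2 + p.2 ^+ 2 == N%:Z) && ~~ (2 %| p.1)%Z) && primary p.1 p.2
   = (p.1 ^+ 2 + p.2 ^+ 2 == N%:Z) && primary p.1 p.2.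
  move=> [x y] /=; case: (boolP (x ^+ 2 + y ^+ 2 == N%:Z)) => //= /eqP hA.
  case: (boolP (primary x y)) => hP; last by rewrite andbF.
  by rewrite (L5 _ hP) // hA.
rewrite (eq_bigl _ _ E1) [X in _ + X](reindex _ _ (rng_neg N)) /=.
have E2 : forall p : int * int, (((- p.1) ^+ 2 + (- p.2) ^+ 2 == N%:Z) && ~~ (2 %| - p.1)%Z) && ~~ primary (- p.1) (- p.2)
   = (p.1 ^+ 2 + p.2 ^+ 2 == N%:Z) && primary p.1 p.2.
  move=> [x y] /=; rewrite !sqrrN; case: (boolP (x ^+ 2 + y ^+ 2 == N%:Z)) => //= /eqP hA.
  have hodd : ~~ (2 %| x ^+ 2 + y ^+ 2)%Z by rewrite hA.
  have hxy := L2 hodd.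
  case: (boolP (2 %| x)%Z) => hx.
    have -> : (2 %| - x)%Z by lia.
    rewrite /=; apply/esym/negbTE; apply/negP => hP.
    by move: (L5 hodd hP); rewrite hx.
  have -> : (2 %| - x)%Z = false by lia.
  have hy : (2 %| y)%Z by move: hxy; rewrite (negbTE hx) => /esym /negbFE.
  by rewrite /= (L6 hx hy) negbK.
rewrite [X in _ + X](eq_bigl (fun p => (p.1 ^+ 2 + p.2 ^+ 2 == N%:Z) && primary p.1 p.2)); last first.
  by move=> p; rewrite -E2.
have E3 : forall p : int * int, zunit R (- p.1) (- p.2) N ^ K = zunit R p.1 p.2 N ^ K.
  by move=> [x y] /=; rewrite zunit_neg negz_even.
rewrite [X in _ + X](eq_bigr (fun p => zunit R p.1 p.2 N ^ K)); last by move=> p _; exact: E3.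
by rewrite two_mul.
Qed.

Lemma EvenHalf (N : nat) (K : int) : ~~ (2 %| N%:Z)%Z ->
  \sum_(p <- pairs (rng N) (rng N) | (p.1 ^+ 2 + p.2 ^+ 2 == N%:Z) && (2 %| p.1)%Z)
     zunit R p.1 p.2 N ^ K =
  jj R ^ K * \sum_(p <- pairs (rng N) (rng N) | (p.1 ^+ 2 + p.2 ^+ 2 == N%:Z) && ~~ (2 %| p.1)%Z)
     zunit R p.1 p.2 N ^ K.
Proof.
move=> hN.
rewrite {1}(reindex _ _ (rng_rot N)) /= big_distrr /=.
apply: eq_big => [[x y]|[x y] _] /=.
  rewrite sqrrN addrC; case: (boolP (x ^+ 2 + y ^+ 2 == N%:Z)) => //= /eqP hA.
  have hodd : ~~ (2 %| x ^+ 2 + y ^+ 2)%Z by rewrite hA.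
  have hxy := L2 hodd.
  have -> : (2 %| - y)%Z = (2 %| y)%Z by lia.
  by rewrite hxy negbK.
by rewrite zunit_rot expfzMl.
Qed.

End D.

Section F.
Variable R : realType.

Lemma WP_odd (M : int) (N : nat) : (N %% 2 = 1)%N -> WP R M N = WPodd R M N.
Proof.
move=> h; rewrite /WP.
have ho : odd N by move: h; rewrite modn2; case: (odd N).
have -> : logn 2 N = 0%N by rewrite logn_coprime // coprime2n ho.
by rewrite expn0 divn1 mulr0n mulr0 !mul0r expi0 mul1r.
Qed.

Lemma sixteen (X Y : R[i]) : X * Y = 16 * (4^-1 * X) * (4^-1 * Y).
Proof.
have h4 : (4 : R[i]) != 0 by rewrite pnatr_eq0.
by field.
Qed.

Lemma fin3 (a b X Y : R[i]) : a * b = 1 ->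
  a * (2 * X) * (b * (2 * Y)) + 2 * X * (2 * Y) = 8 * X * Y.
Proof.
move=> h; transitivity ((a * b) * 4 * X * Y + 4 * X * Y); first ring.
by rewrite h; ring.
Qed.

Lemma ST_01 n (M M' : int) : (3 <= n)%N -> (n %% 4 != 2)%N -> (n %% 4 != 3)%N -> ST R n M M' = 0.
Proof.
move=> hn h2 h3; rewrite /ST big_pred0 // => [[[x y] [x' y']]]; rewrite /goodT /=.
apply/negP => /and4P [/eqP e1 /eqP e2 _ _].
have [h|h] : (n %% 4 = 0 \/ n %% 4 = 1)%N by lia.
  by apply: (@L3 x y x' y' (n %/ 4)%N%:Z); lia.
by apply: (@L4 x y (n %/ 4)%N%:Z); lia.
Qed.

Lemma ST_2 n (m1 m2 : int) : (3 <= n)%N -> (2 %| m1)%Z -> (2 %| m2)%Z -> (n %% 4 == 2)%N ->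
  ST R n (m1 + m2) (m1 - m2) = 16 * W R (m1 + m2) n.+2 * W R (m1 - m2) (n - 2).
Proof.
move=> hn h1 h2 h4.
have hM' : (2 %| m1 - m2)%Z by lia.
rewrite /ST (eq_bigr (fun q => zunit R q.1.1 q.1.2 n.+2 ^ (m1 + m2) * zunit R q.2.1 q.2.2 (n - 2) ^ (m1 - m2))); last first.
  by move=> q _; rewrite /GT negz_even.
have E : forall q, goodT n q = (q.1.1 ^+ 2 + q.1.2 ^+ 2 == (n.+2)%:Z) && (q.2.1 ^+ 2 + q.2.2 ^+ 2 == ((n - 2)%N)%:Z).
  move=> [[x y] [x' y']]; rewrite /goodT /=.
  case: (boolP (x ^+ 2 + y ^+ 2 == (n.+2)%:Z)) => [/eqP e1|] //=.
  case: (boolP (x' ^+ 2 + y' ^+ 2 == ((n - 2)%N)%:Z)) => [/eqP e2|] //=.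
  have : (4 %| x ^+ 2 + y ^+ 2)%Z by rewrite e1; lia.
  move/L1 => /andP [hx hy].
  have : (4 %| x' ^+ 2 + y' ^+ 2)%Z by rewrite e2; lia.
  move/L1 => /andP [hx' hy'].
  apply/andP; split; lia.
transitivity (\sum_(q <- QT n | (q.1.1 ^+ 2 + q.1.2 ^+ 2 == (n.+2)%:Z) && (q.2.1 ^+ 2 + q.2.2 ^+ 2 == ((n - 2)%N)%:Z))
   zunit R q.1.1 q.1.2 n.+2 ^ (m1 + m2) * zunit R q.2.1 q.2.2 (n - 2) ^ (m1 - m2)).
  by apply: eq_bigl.
transitivity ((\sum_(p <- pairs (rng n.+2) (rng n.+2) | p.1 ^+ 2 + p.2 ^+ 2 == (n.+2)%:Z) zunit R p.1 p.2 n.+2 ^ (m1 + m2)) *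
  (\sum_(p <- pairs (rng (n - 2)) (rng (n - 2)) | p.1 ^+ 2 + p.2 ^+ 2 == ((n - 2)%N)%:Z) zunit R p.1 p.2 (n - 2) ^ (m1 - m2))).
  exact: prod_split.
by rewrite !Wpair -sixteen.
Qed.


Lemma par_sub (x y : int) : (2 %| x - y)%Z = ((2 %| x)%Z == (2 %| y)%Z).
Proof. lia. Qed.

Lemma ST_3 n (m1 m2 : int) : (3 <= n)%N -> (2 %| m1)%Z -> (2 %| m2)%Z -> (n %% 4 == 3)%N ->
  ST R n (m1 + m2) (m1 - m2) = 8 * WP R (m1 + m2) n.+2 * WP R (m1 - m2) (n - 2).
Proof.
move=> hn h1 h2 h4.
have hM : (2 %| m1 + m2)%Z by lia.
have hM' : (2 %| m1 - m2)%Z by lia.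
have o1 : ~~ (2 %| (n.+2)%:Z)%Z by lia.
have o2 : ~~ (2 %| ((n - 2)%N)%:Z)%Z by lia.
rewrite /ST (eq_bigr (fun q => zunit R q.1.1 q.1.2 n.+2 ^ (m1 + m2) * zunit R q.2.1 q.2.2 (n - 2) ^ (m1 - m2))); last first.
  by move=> q _; rewrite /GT negz_even.
have E : forall q, goodT n q = (q.1.1 ^+ 2 + q.1.2 ^+ 2 == (n.+2)%:Z) && (q.2.1 ^+ 2 + q.2.2 ^+ 2 == ((n - 2)%N)%:Z)
    && ((2 %| q.1.1)%Z == (2 %| q.2.1)%Z).
  move=> [[x y] [x' y']]; rewrite /goodT /=.
  case: (boolP (x ^+ 2 + y ^+ 2 == (n.+2)%:Z)) => [/eqP e1|] //=.
  case: (boolP (x' ^+ 2 + y' ^+ 2 == ((n - 2)%N)%:Z)) => [/eqP e2|] //=.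
  have hx := @L2 x y; have hx' := @L2 x' y'.
  rewrite e1 in hx; rewrite e2 in hx'.
  move: (hx o1) (hx' o2) => {}hx {}hx'.
  rewrite !par_sub hx hx'.
  by case: (2 %| y)%Z; case: (2 %| y')%Z.
transitivity (\sum_(q <- QT n | (q.1.1 ^+ 2 + q.1.2 ^+ 2 == (n.+2)%:Z) && (q.2.1 ^+ 2 + q.2.2 ^+ 2 == ((n - 2)%N)%:Z)
    && ((2 %| q.1.1)%Z == (2 %| q.2.1)%Z))
   zunit R q.1.1 q.1.2 n.+2 ^ (m1 + m2) * zunit R q.2.1 q.2.2 (n - 2) ^ (m1 - m2)).
  by apply: eq_bigl.
transitivity (
  (\sum_(p <- pairs (rng n.+2) (rng n.+2) | (p.1 ^+ 2 + p.2 ^+ 2 == (n.+2)%:Z) && (2 %| p.1)%Z)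
     zunit R p.1 p.2 n.+2 ^ (m1 + m2)) *
  (\sum_(p <- pairs (rng (n - 2)) (rng (n - 2)) | (p.1 ^+ 2 + p.2 ^+ 2 == ((n - 2)%N)%:Z) && (2 %| p.1)%Z)
     zunit R p.1 p.2 (n - 2) ^ (m1 - m2)) +
  (\sum_(p <- pairs (rng n.+2) (rng n.+2) | (p.1 ^+ 2 + p.2 ^+ 2 == (n.+2)%:Z) && ~~ (2 %| p.1)%Z)
     zunit R p.1 p.2 n.+2 ^ (m1 + m2)) *
  (\sum_(p <- pairs (rng (n - 2)) (rng (n - 2)) | (p.1 ^+ 2 + p.2 ^+ 2 == ((n - 2)%N)%:Z) && ~~ (2 %| p.1)%Z)
     zunit R p.1 p.2 (n - 2) ^ (m1 - m2))).
  exact: prod_split2.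
rewrite (@EvenHalf R n.+2 (m1 + m2) o1) (@EvenHalf R (n - 2)%N (m1 - m2) o2).
rewrite (@OddHalf R n.+2 (m1 + m2) o1 hM) (@OddHalf R (n - 2)%N (m1 - m2) o2 hM').
have w1 : WP R (m1 + m2) n.+2 = WPodd R (m1 + m2) n.+2 by apply: WP_odd; lia.
have w2 : WP R (m1 - m2) (n - 2) = WPodd R (m1 - m2) (n - 2) by apply: WP_odd; lia.
rewrite w1 w2; apply: fin3.
rewrite -expfzDr ?jj_neq0 //.
have -> : m1 + m2 + (m1 - m2) = 2 * m1 by ring.
exact: jj2z_even.
Qed.

End F.

Section G.
Variable R : realType.

Definition QS (n : nat) := pairs (pairs (rng n) (rng n)) (pairs (rng n) (rng n)).

Definition goodS (n : nat) (q : (int * int) * (int * int)) : bool :=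
  (q.1.1 * q.2.2 - q.1.2 * q.2.1 == 1) && (q.1.1 ^+ 2 + q.1.2 ^+ 2 + q.2.1 ^+ 2 + q.2.2 ^+ 2 == n%:Z).

Definition phi (q : (int * int) * (int * int)) : (int * int) * (int * int) :=
  ((q.1.1 + q.2.2, q.1.2 - q.2.1), (q.1.1 - q.2.2, - (q.1.2 + q.2.1))).

Lemma phi_perm n : (3 <= n)%N ->
  perm_eq (map phi (seq.filter (goodS n) (QS n))) (seq.filter (goodT n) (QT n)).
Proof.
move=> hn.
apply: uniq_perm.
- rewrite map_inj_uniq ?filter_uniq // ?pairs_uniq ?rng_uniq //.
  move=> [[a b] [c d]] [[a' b'] [c' d']] /= [] h1 h2 h3 h4; congr ((_, _), (_, _)); lia.
- by rewrite filter_uniq // QT_uniq.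
move=> q; apply/mapP/idP.
  move=> [[[a b] [c d]]]; rewrite mem_filter => /andP [Hg Hm] ->.
  rewrite /goodS /= in Hg; move/andP: Hg => [/eqP hdet /eqP hnu].
  rewrite /QS !mem_pairs !mem_rng in Hm.
  rewrite mem_filter /goodT /QT /phi !mem_pairs !mem_rng /=.
  have I1 : (a + d) ^+ 2 + (b - c) ^+ 2 = (a ^+ 2 + b ^+ 2 + c ^+ 2 + d ^+ 2) + 2 * (a * d - b * c) by ring.
  have I2 : (a - d) ^+ 2 + (- (b + c)) ^+ 2 = (a ^+ 2 + b ^+ 2 + c ^+ 2 + d ^+ 2) - 2 * (a * d - b * c) by ring.
  have B1 := sq_bound (a + d). have B2 := sq_bound (b - c).
  have B3 := sq_bound (a - d). have B4 := sq_bound (- (b + c)).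
  have e1 : (a + d) ^+ 2 + (b - c) ^+ 2 = (n.+2)%:Z by rewrite I1 hnu hdet; clear -hn; lia.
  have e2 : (a - d) ^+ 2 + (- (b + c)) ^+ 2 = ((n - 2)%N)%:Z by rewrite I2 hnu hdet; clear -hn; lia.
  apply/andP; split.
    apply/and4P; split; [by rewrite e1 | by rewrite e2 | apply/dvdzP; exists d; ring | apply/dvdzP; exists b; ring].
  clear -e1 e2 B1 B2 B3 B4 hn; lia.
move: q => [[x y] [x' y']].
move=> Hq; rewrite mem_filter /goodT /QT !mem_pairs !mem_rng /= in Hq.
move: Hq => /andP [/and4P [/eqP e1 /eqP e2 p1 p2] _].
move/dvdzP: p1 => [k1 hk1]; move/dvdzP: p2 => [k2 hk2].
have ex : x = x' + k1 * 2 by clear -hk1; lia.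
have ey : y = y' + k2 * 2 by clear -hk2; lia.
subst x y.
exists ((x' + k1, k2), (- y' - k2, k1)); last by rewrite /phi /=; congr ((_, _), (_, _)); ring.
rewrite mem_filter /goodS /QS !mem_pairs !mem_rng /=.
have I1 : (x' + k1 * 2) ^+ 2 + (y' + k2 * 2) ^+ 2 - (x' ^+ 2 + y' ^+ 2) =
   4 * ((x' + k1) * k1 - k2 * (- y' - k2)) by ring.
have I2 : (x' + k1 * 2) ^+ 2 + (y' + k2 * 2) ^+ 2 + (x' ^+ 2 + y' ^+ 2) =
   2 * ((x' + k1) ^+ 2 + k2 ^+ 2 + (- y' - k2) ^+ 2 + k1 ^+ 2) by ring.
have B1 := sq_bound (x' + k1). have B2 := sq_bound k2.
have B3 := sq_bound (- y' - k2). have B4 := sq_bound k1.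
have hdet : (x' + k1) * k1 - k2 * (- y' - k2) = 1 by clear -I1 e1 e2 hn; lia.
have hnu : (x' + k1) ^+ 2 + k2 ^+ 2 + (- y' - k2) ^+ 2 + k1 ^+ 2 = n%:Z by clear -I2 e1 e2 hn; lia.
apply/andP; split; first by rewrite hdet hnu !eqxx.
clear -hnu B1 B2 B3 B4; lia.
Qed.

End G.

Unset Implicit Arguments.
Set Strict Implicit.

Lemma Se_ST (R : realType) (th1 th2 : 'M[int]_2 -> R)
  (Hdec : forall g : 'M[int]_2, \det g = 1 -> 2 < nuH g ->
     exists r : R, 0 < r /\
       map_mx (fun z : int => z%:~R) g = kmat (th1 g) *m amat r *m kmat (th2 g))
  (m1 m2 : int) (n : nat) (hn : (3 <= n)%N) :
  Se th1 th2 m1 m2 n = ST R n (m1 + m2) (m1 - m2).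
Proof.
transitivity (\sum_(q <- QS n | goodS n q) expi (2 * th1 (mx22 q.1.1 q.1.2 q.2.1 q.2.2) * m1%:~R
   + 2 * th2 (mx22 q.1.1 q.1.2 q.2.1 q.2.2) * m2%:~R)).
  rewrite /Se /QS [RHS]big_mkcond /pairs big_allpairs big_allpairs.
  apply: eq_bigr => a _; apply: eq_bigr => b _; rewrite big_allpairs.
  apply: eq_bigr => c _; rewrite [LHS]big_mkcond; apply: eq_bigr => d _.
  by rewrite det_mx22 nuH_mx22.
transitivity (\sum_(q <- QS n | goodS n q) GT R n (m1 + m2) (m1 - m2) (phi q)).
  apply: eq_bigr => [[[a b] [c d]]] /andP [/eqP h1 /eqP h2].
  exact: (@term_eq R th1 th2 Hdec a b c d n hn h1 h2 m1 m2).
rewrite -big_filter.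
transitivity (\sum_(q <- map phi (seq.filter (goodS n) (QS n))) GT R n (m1 + m2) (m1 - m2) q).
  by rewrite big_map.
by rewrite (perm_big _ (phi_perm hn)) big_filter.
Qed.

Theorem lemma3p6 (R : realType) (th1 th2 : 'M[int]_2 -> R)
  (Hdec : forall g : 'M[int]_2, \det g = 1 -> 2 < nuH g ->
     exists r : R, 0 < r /\
       map_mx (fun z : int => z%:~R) g = kmat (th1 g) *m amat r *m kmat (th2 g))
  (m1 m2 : int) (n : nat) (hn : (3 <= n)%N) :
  (~~ (2 %| m1)%Z || ~~ (2 %| m2)%Z -> Se th1 th2 m1 m2 n = 0) /\
  ((2 %| m1)%Z && (2 %| m2)%Z ->
     Se th1 th2 m1 m2 n =
       if (n %% 4 == 2)%N then 16 * W R (m1 + m2) n.+2 * W R (m1 - m2) (n - 2)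
       else if (n %% 4 == 3)%N then 8 * WP R (m1 + m2) n.+2 * WP R (m1 - m2) (n - 2)
       else 0).
Proof.
have E := Se_ST R th1 th2 Hdec m1 m2 n hn.
split.
  by move=> hodd; rewrite E; apply: ST_odd.
move=> /andP [h1 h2]; rewrite E.
case: ifP => h2'; first exact: ST_2.
case: ifP => h3; first exact: ST_3.
by apply: ST_01 => //; rewrite ?h2' ?h3.
Qed.
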